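(* Let $t\ge1$ and $q\ge2$ be integers. Then $L(tS_{q,q,q})\xrightarrow{\cap} tS_{q-1,q-1,q}$.
   Context: All graphs are finite and simple. For graphs $G_1=(V_1,E_1)$, $G_2=(V_2,E_2)$, $G_1\cap G_2=(V_1\cap V_2, E_1\cap E_2)$. For a graph $G=(V,E)$ and an injective map $\alpha$ on $V$, $G^{\alpha}$ has vertex set $\alpha(V)$ and edge set $\{\{\alpha(v),\alpha(w)\}: \{v,w\}\in E\}$. We write $G\xrightarrow{\cap} H$ if $H$ is (isomorphic to) $G^{\alpha_1}\cap\cdots\cap G^{\alpha_k}$ for some $k\ge1$ and injective maps $\alpha_1,\dots,\alpha_k$ on $V(G)$. For integers $a,b,c\ge1$, $S_{a,b,c}$ is the tree consisting of a vertex of degree $3$ together with three pendant paths having $a$, $b$, $c$ edges respectively; $tS_{a,b,c}$ is the disjoint union of $t$ copies of $S_{a,b,c}$. $L(G)$ denotes the line graph of $G$. *)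

(* Defs.v *)
From mathcomp Require Import all_boot.
Set Implicit Arguments. Unset Strict Implicit. Unset Printing Implicit Defensive.

(* A finite simple graph is represented by a finite ambient type T, a vertex
   set A : {set T}, and a (symmetric, irreflexive) adjacency relation e : rel T,
   only its restriction to A being relevant. *)

Definition graph_iso (W U : finType) (B : {set W}) (f : rel W)
    (C : {set U}) (g : rel U) : Prop :=
  exists phi : W -> U,
    [/\ {in B &, injective phi}, phi @: B = C &
        {in B &, forall x y, g (phi x) (phi y) = f x y}].

Definition cap_vert (V U : finType) (A : {set V}) (n : nat)
    (alpha : 'I_n.+1 -> V -> U) : {set U} :=
  [set u | [forall i, u \in alpha i @: A]].

Definition cap_adj (V U : finType) (A : {set V}) (e : rel V) (n : nat)
    (alpha : 'I_n.+1 -> V -> U) : rel U :=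
  fun u w => [forall i, [exists v in A, exists x in A,
                 [&& alpha i v == u, alpha i x == w & e v x]]].

(* G -cap-> H : H is isomorphic to an intersection of k >= 1 injective images
   of G (the maps take values in an arbitrary finite ambient type U). *)
Definition cap_rep (V : finType) (A : {set V}) (e : rel V)
    (W : finType) (B : {set W}) (f : rel W) : Prop :=
  exists (U : finType) (n : nat) (alpha : 'I_n.+1 -> V -> U),
    (forall i, {in A &, injective (alpha i)}) /\
    graph_iso B f (cap_vert A alpha) (cap_adj A e alpha).

(* The spider S_{a,b,c} on 'I_(a+b+c).+1: vertex 0 is the centre, the legs are
   1..a, a+1..a+b, a+b+1..a+b+c (each a path starting next to the centre). *)
Definition spider_base (a b c : nat) (i j : nat) : bool :=
  ((i == 0) && (j \in [:: 1; a.+1; (a + b).+1])) ||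
  ((j == i.+1) && (j \notin [:: 1; a.+1; (a + b).+1])).

Definition spider_adj (a b c : nat) : rel 'I_(a + b + c).+1 :=
  fun i j => spider_base a b c i j || spider_base a b c j i.
Arguments spider_adj : clear implicits.

Definition copies_adj (t : nat) (V : finType) (e : rel V) : rel ('I_t * V) :=
  fun p r => (p.1 == r.1) && e p.2 r.2.

Arguments copies_adj : clear implicits.
Definition tS_adj (t a b c : nat) : rel ('I_t * 'I_(a + b + c).+1) :=
  copies_adj t _ (spider_adj a b c).

Definition line_vert (V : finType) (A : {set V}) (e : rel V) : {set {set V}} :=
  [set E | [exists x in A, exists y in A, e x y && (E == [set x; y])]].

Definition line_adj (V : finType) : rel {set V} :=
  fun E F => (E != F) && (E :&: F != set0).
Arguments tS_adj : clear implicits.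

(* Main.v *)
Require Import Defs.
From mathcomp Require Import all_boot.
From mathcomp Require Import zify.

Definition parg (a b j : nat) : nat := if j \in [:: 1; a.+1; (a + b).+1] then 0 else j.-1.
Definition gg (b : bool) (q m : nat) : nat :=
  if b then (if m == 0 then 1 else if m <= q.-1 then m + q else if m <= q+q-2 then m+2-q
            else if m <= q+q+q-2 then m.+2 else q+q)
  else (if m <= q+q-2 then m.+1 else if m <= q+q+q-2 then m.+2 else q+q).
Definition natadj q (x y : nat) := (x != y) && [|| x == parg q q y, parg q q x == y | parg q q x == parg q q y].
Definition pack q m x1 p1 x2 p2 pt :=
  [/\ gg true q m = x1, gg false q m = x2, parg q q x1 = p1,
      parg q q x2 = p2 & parg q.-1 q.-1 m = pt].
Ltac solve_reg := move=> hq H; rewrite /pack; split; rewrite /gg /parg /= ?inE /=;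
  repeat (case: ifP => ?; try (exfalso; lia)); rewrite /=; lia.
Lemma reg1 q m : 2 <= q -> m = 0 -> pack q m 1 0 1 0 0. Proof. solve_reg. Qed.
Lemma reg2 q m : 2 <= q -> m = 1 -> pack q m q.+1 0 2 1 0. Proof. solve_reg. Qed.
Lemma reg3 q m : 2 <= q -> 2 <= m <= q.-1 -> pack q m (m+q) (m+q-1) m.+1 m m.-1. Proof. solve_reg. Qed.
Lemma reg4 q m : 2 <= q -> m = q -> pack q m 2 1 q.+1 0 0. Proof. solve_reg. Qed.
Lemma reg5 q m : 2 <= q -> q.+1 <= m <= q+q-2 -> pack q m (m+2-q) (m+1-q) m.+1 m m.-1. Proof. solve_reg. Qed.
Lemma reg6 q m : 2 <= q -> m = q+q-1 -> pack q m (q+q).+1 0 (q+q).+1 0 0. Proof. solve_reg. Qed.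
Lemma reg7 q m : 2 <= q -> q+q <= m <= q+q+q-2 -> pack q m m.+2 m.+1 m.+2 m.+1 m.-1. Proof. solve_reg. Qed.
Lemma regions q m : 2 <= q -> m <= q+q+q-2 ->
  [\/ m = 0, m = 1, (2 <= m <= q.-1) | [\/ m = q, (q.+1 <= m <= q+q-2), m = q+q-1 | (q+q <= m <= q+q+q-2)]].
Proof.
move=> hq hm.
have [h0|h0] := eqVneq m 0; first by constructor 1.
have [h1|h1] := eqVneq m 1; first by constructor 2.
have [h3|h3] := boolP (2 <= m <= q.-1); first by constructor 3.
constructor 4.
have [h4|h4] := eqVneq m q; first by constructor 1.
have [h5|h5] := boolP (q.+1 <= m <= q+q-2); first by constructor 2.
have [h6|h6] := eqVneq m (q+q-1); first by constructor 3.
constructor 4; lia.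
Qed.
Lemma core q ma mb : 2 <= q -> ma <= q+q+q-2 -> mb <= q+q+q-2 ->
 ((0 < mb) && (ma == parg q.-1 q.-1 mb) || (0<ma) && (mb == parg q.-1 q.-1 ma)) =
   natadj q (gg true q ma) (gg true q mb) && natadj q (gg false q ma) (gg false q mb).
Proof.
move=> hq ha hb; rewrite /natadj.
case: (regions _ _ hq ha) => [H|H|H|[H|H|H|H]];
  (first [case: (reg1 _ _ hq H) | case: (reg2 _ _ hq H) | case: (reg3 _ _ hq H) | case: (reg4 _ _ hq H) | case: (reg5 _ _ hq H) | case: (reg6 _ _ hq H) | case: (reg7 _ _ hq H)]) => E1 E2 E3 E4 E5; rewrite E1 E2 ?E3 ?E4 ?E5; clear E1 E2 E3 E4 E5;
case: (regions _ _ hq hb) => [H'|H'|H'|[H'|H'|H'|H']];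
  (first [case: (reg1 _ _ hq H') | case: (reg2 _ _ hq H') | case: (reg3 _ _ hq H') | case: (reg4 _ _ hq H') | case: (reg5 _ _ hq H') | case: (reg6 _ _ hq H') | case: (reg7 _ _ hq H')]) => F1 F2 F3 F4 F5; rewrite F1 F2 ?F3 ?F4 ?F5; clear F1 F2 F3 F4 F5.
all: lia.
Qed.


Definition ff (b : bool) (q j : nat) : nat :=
  if b then (if j == 1 then 0 else if j <= q then q+j-2 else if j < q+q then j-q
             else if j == q+q then q+q+q-1 else j-2)
  else (if j < q+q then j.-1 else if j == q+q then q+q+q else j-2).

Ltac ifs := repeat (case: ifP => ?; try (exfalso; lia)); rewrite /=.

Lemma parg_le a b j : parg a b j <= j.
Proof. rewrite /parg; case: ifP => _; lia. Qed.
Lemma parg_lt a b j : 0 < j -> parg a b j < j.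
Proof. rewrite /parg; case: ifP => _; lia. Qed.

Lemma ff_le b q j : 2 <= q -> 0 < j <= q+q+q -> ff b q j <= q+q+q.
Proof. move=> hq hj; rewrite /ff; case: b; ifs; lia. Qed.

Lemma ff_inj b q j1 j2 : 2 <= q -> 0 < j1 <= q+q+q -> 0 < j2 <= q+q+q ->
  ff b q j1 = ff b q j2 -> j1 = j2.
Proof. move=> hq h1 h2; rewrite /ff; case: b; ifs; lia. Qed.

Lemma ff_gg b q m : 2 <= q -> m <= q+q+q-2 -> ff b q (gg b q m) = m.
Proof. move=> hq hm; rewrite /gg; case: b; ifs; rewrite /ff; ifs; lia. Qed.

Lemma gg_range b q m : 2 <= q -> m <= q+q+q-2 -> 0 < gg b q m <= q+q+q.
Proof. move=> hq hm; rewrite /gg; case: b; ifs; lia. Qed.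

Lemma ff_both q j1 j2 : 2 <= q -> 0 < j1 <= q+q+q -> 0 < j2 <= q+q+q ->
  ff true q j1 = ff false q j2 -> ff true q j1 <= q+q+q-2.
Proof. move=> hq h1 h2; rewrite /ff; ifs; lia. Qed.

Lemma spider_baseE a b c i j : spider_base a b c i j = (0 < j) && (i == parg a b j).
Proof. rewrite /spider_base /parg !inE; case: ifP => H; lia. Qed.

Set Implicit Arguments. Unset Strict Implicit.

Notation VT t q := ('I_t * 'I_(q+q+q).+1)%type.

Definition ed t q (l : VT t q) : {set VT t q} := [set (l.1, inord (parg q q l.2)); l].

Lemma peq t n (z l : ('I_t * 'I_n)%type) : (z == l) = (nat_of_ord (z.1) == nat_of_ord (l.1)) && (nat_of_ord (z.2) == nat_of_ord (l.2)).
Proof. by case: z l => [a b] [c d]. Qed.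

Lemma val_inordp t q (l : VT t q) : nat_of_ord (inord (parg q q l.2) : 'I_(q+q+q).+1) = parg q q l.2.
Proof. by rewrite inordK // ltnS (leq_trans (parg_le _ _ _)) // -ltnS ltn_ord. Qed.

Lemma in_ed t q (l z : VT t q) :
  (z \in ed l) = ((nat_of_ord (z.1) == nat_of_ord (l.1)) && (nat_of_ord (z.2) == parg q q l.2)) || (z == l).
Proof. by rewrite !inE [z == (_, _)]peq /= val_inordp. Qed.

Lemma ed_inj t q (l1 l2 : VT t q) : 0 < l1.2 -> 0 < l2.2 -> ed l1 = ed l2 -> l1 = l2.
Proof.
move=> h1 h2 E.
have m1 : l1 \in ed l2 by rewrite -E in_ed !eqxx !orbT.
have m2 : l2 \in ed l1 by rewrite E in_ed !eqxx !orbT.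
rewrite in_ed in m1; rewrite in_ed in m2.
case/orP: m1 => [/andP[_ /eqP e1]|/eqP //]; case/orP: m2 => [/andP[_ /eqP e2]| /eqP -> //].
have := parg_lt q q _ h1; have := parg_lt q q _ h2; lia.
Qed.

Lemma ed_eq t q (x y : VT t q) : nat_of_ord (x.1) = nat_of_ord (y.1) -> nat_of_ord (x.2) = parg q q y.2 -> ed y = [set x; y].
Proof.
move=> e1 e2; rewrite /ed; congr [set _; _].
case: x e1 e2 => x1 x2 /= e1 e2; congr pair; apply: val_inj => //.
by rewrite /= val_inordp. Qed.

Lemma ed_line t q (l : VT t q) : 0 < l.2 -> ed l \in line_vert [set: VT t q] (tS_adj t q q q).
Proof.
move=> h; rewrite inE; apply/existsP; exists (l.1, inord (parg q q l.2)); rewrite inE /=.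
apply/existsP; exists l; rewrite inE /= /ed eqxx andbT.
by rewrite /tS_adj /copies_adj /= eqxx /spider_adj spider_baseE h val_inordp eqxx.
Qed.

Lemma line_ed t q E : E \in line_vert [set: VT t q] (tS_adj t q q q) ->
  exists2 l : VT t q, 0 < l.2 & E = ed l.
Proof.
rewrite inE => /existsP[x /andP[_ /existsP[y /andP[_ /andP[exy /eqP ->]]]]].
move: exy; rewrite /tS_adj /copies_adj /spider_adj !spider_baseE.
case/andP=> /eqP e1 /orP[/andP[h /eqP e2]|/andP[h /eqP e2]].
- by exists y => //; rewrite (@ed_eq _ _ x y) // e1.
- by exists x => //; rewrite setUC (@ed_eq _ _ y x) // e1.
Qed.

Lemma adj_ed t q (l1 l2 : VT t q) : 0 < l1.2 -> 0 < l2.2 ->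
  line_adj (ed l1) (ed l2) = (l1.1 == l2.1) && natadj q l1.2 l2.2.
Proof.
move=> h1 h2; rewrite /line_adj.
have -> : (ed l1 != ed l2) = (l1 != l2).
  by apply/idP/idP; apply: contra => /eqP; [move-> | move/ed_inj; move=> H; rewrite H].
have -> : (ed l1 :&: ed l2 != set0) = (nat_of_ord (l1.1) == nat_of_ord (l2.1)) &&
   [|| nat_of_ord (l1.2) == parg q q l2.2, parg q q l1.2 == nat_of_ord (l2.2), parg q q l1.2 == parg q q l2.2
     | nat_of_ord (l1.2) == nat_of_ord (l2.2)].
  apply/set0Pn/idP.
  - case=> z; rewrite inE !in_ed !peq; lia.
  - case/andP=> e1 /orP[e|/orP[e|/orP[e|e]]].
    + by exists l1; rewrite inE !in_ed !peq; lia.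
    + by exists l2; rewrite inE !in_ed !peq; lia.
    + by exists (l1.1, inord (parg q q l1.2)); rewrite inE !in_ed !peq /= val_inordp; lia.
    + by exists l1; rewrite inE !in_ed !peq; lia.
have -> : (l1.1 == l2.1) = (nat_of_ord (l1.1) == l2.1) by [].
rewrite peq /natadj; lia.
Qed.


Notation WT t q := ('I_t * 'I_(q.-1 + q.-1 + q).+1)%type.
Notation LV t q := (line_vert [set: VT t q] (tS_adj t q q q)).

Definition hh t q (b : bool) (l : VT t q) : VT t q := (l.1, inord (ff b q l.2)).
Definition pre t q (b : bool) (a : WT t q) : VT t q := (a.1, inord (gg b q a.2)).
Definition phi t q (a : WT t q) : VT t q := (a.1, inord a.2).
Definition alph t q (x0 : VT t q) (i : 'I_2) (E : {set VT t q}) : VT t q :=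
  if [pick l : VT t q | (0 < l.2) && (ed l == E)] is Some l then hh (i == ord0) l else x0.

Lemma alph_ed t q (x0 : VT t q) i (l : VT t q) : 0 < l.2 -> alph x0 i (ed l) = hh (i == ord0) l.
Proof.
move=> h; rewrite /alph; case: pickP => [l' /andP[h' /eqP e]|/(_ l)].
  by rewrite (ed_inj h' h e).
by rewrite h eqxx.
Qed.

Lemma wbound q (m : 'I_(q.-1 + q.-1 + q).+1) : 2 <= q -> (m : nat) <= q+q+q-2.
Proof. by have := ltn_ord m; lia. Qed.
Lemma vbound q (m : 'I_(q+q+q).+1) : (m : nat) <= q+q+q.
Proof. by have := ltn_ord m; lia. Qed.

Lemma ff_le' b q (j : 'I_(q+q+q).+1) : 2 <= q -> 0 < j -> ff b q j <= q+q+q.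
Proof. move=> hq hj; apply: ff_le => //; have := vbound j; lia. Qed.

Lemma ff_lt b q (j : 'I_(q+q+q).+1) : 2 <= q -> 0 < j -> ff b q j < (q+q+q).+1.
Proof. move=> hq hj; have := ff_le' b hq hj; lia. Qed.

Lemma hh2 t q b (l : VT t q) : 2 <= q -> 0 < l.2 -> nat_of_ord ((hh b l).2) = ff b q l.2.
Proof. by move=> hq hl; rewrite inordK // ff_lt. Qed.

Lemma vrange q (j : 'I_(q+q+q).+1) : 0 < j -> 0 < j <= q+q+q.
Proof. by move=> h; rewrite h /= -ltnS ltn_ord. Qed.

Lemma wlt q (m : 'I_(q.-1 + q.-1 + q).+1) : 2 <= q -> (m : nat) < (q+q+q).+1.
Proof. move=> hq; have := wbound m hq; lia. Qed.

Lemma pre2 t q b (a : WT t q) : 2 <= q -> nat_of_ord ((pre b a).2) = gg b q a.2.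
Proof.
move=> hq; rewrite /= inordK //; have := gg_range b q a.2 hq (wbound a.2 hq) ; lia.
Qed.
Lemma pre_pos t q b (a : WT t q) : 2 <= q -> 0 < (pre b a).2.
Proof. move=> hq; rewrite pre2 //; have := gg_range b q a.2 hq (wbound a.2 hq); lia. Qed.

Lemma hh_pre t q b (l : VT t q) (a : WT t q) : 2 <= q -> 0 < l.2 -> (hh b l == phi a) = (l == pre b a).
Proof.
move=> hq hl; rewrite !peq pre2 //= !inordK //; last first.
- have := ff_le' b hq hl; lia.
- have := wbound a.2 hq; lia.
congr (_ && _); apply/eqP/eqP => [E|->]; last by rewrite ff_gg // wbound.
apply: (ff_inj b q _ _ hq); first by have := vbound l.2; lia.
  have := gg_range b q a.2 hq (wbound a.2 hq); lia.
by rewrite ff_gg // wbound.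
Qed.

Lemma forall2 (P : 'I_2 -> bool) : [forall i, P i] = P ord0 && P (@Ordinal 2 1 isT).
Proof.
apply/forallP/andP => [H|[h0 h1] [[|[|//]] hi]]; first by split; apply: H.
  by have -> : Ordinal hi = ord0 by apply: val_inj.
by have -> : Ordinal hi = (@Ordinal 2 1 isT) by apply: val_inj.
Qed.

Lemma img_alph t q (x0 : VT t q) i u :
  (u \in alph x0 i @: LV t q) = [exists l : VT t q, (0 < l.2) && (hh (i == ord0) l == u)].
Proof.
apply/imsetP/existsP => [[E /line_ed [l hl ->] ->]|[l /andP[hl /eqP <-]]].
  by exists l; rewrite hl alph_ed // eqxx.
by exists (ed l); [exact: ed_line | rewrite alph_ed].
Qed.

Lemma inner t q (x0 : VT t q) i (a b : WT t q) : 2 <= q ->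
  [exists v in LV t q, exists x in LV t q,
     [&& alph x0 i v == phi a, alph x0 i x == phi b & line_adj v x]] =
  line_adj (ed (pre (i == ord0) a)) (ed (pre (i == ord0) b)).
Proof.
move=> hq; apply/idP/idP.
  case/exists_inP => v /line_ed[l1 h1 ->] /exists_inP[x /line_ed[l2 h2 ->]].
  by rewrite !alph_ed // !hh_pre // => /and3P[/eqP-> /eqP->].
move=> H; apply/exists_inP; exists (ed (pre (i == ord0) a)); first exact/ed_line/pre_pos.
apply/exists_inP; exists (ed (pre (i == ord0) b)); first exact/ed_line/pre_pos.
by rewrite !alph_ed ?pre_pos // !hh_pre ?pre_pos // !eqxx H.
Qed.

Lemma o1n0 : (@Ordinal 2 1 isT == ord0) = false. Proof. by []. Qed.
Lemma o0 : (@ord0 1 == ord0) = true. Proof. by []. Qed.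

Unset Implicit Arguments.

Theorem mainTheorem11 (t q : nat) (ht : 1 <= t) (hq : 2 <= q) :
  cap_rep (line_vert [set: ('I_t * 'I_(q + q + q).+1)%type] (tS_adj t q q q))
          (@line_adj ('I_t * 'I_(q + q + q).+1)%type)
          [set: ('I_t * 'I_(q.-1 + q.-1 + q).+1)%type] (tS_adj t q.-1 q.-1 q).
Proof.
pose x0 : VT t q := (Ordinal ht, ord0).
exists (VT t q), 1, (alph x0); split.
  move=> i E1 E2 /line_ed[l1 h1 ->] /line_ed[l2 h2 ->]; rewrite !alph_ed // => /eqP e.
  congr ed; apply/eqP; move: e; rewrite !peq /= !inordK; last first.
  - have := ff_le' (i == ord0) hq h1; lia.
  - have := ff_le' (i == ord0) hq h2; lia.
  case/andP=> /eqP h0 /eqP e; apply/andP; split; first by apply/eqP.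
  apply/eqP.
  apply: (ff_inj _ q _ _ hq _ _ e); have := vbound l1.2; have := vbound l2.2; lia.
exists (@phi t q); split.
- move=> a b _ _ /eqP; rewrite peq /= !inordK ?wlt //; by move=> e; apply/eqP; rewrite peq.

- apply/setP => u; rewrite /cap_vert inE forall2 !img_alph o1n0 o0.
  apply/imsetP/andP => [[a _ ->]|[/existsP[l1 /andP[p1 /eqP e1]] /existsP[l2 /andP[p2 /eqP e2]]]].
    split; apply/existsP; [exists (pre true a) | exists (pre false a)];
      by rewrite pre_pos // hh_pre ?pre_pos // eqxx.
  have hu : (u.2 : nat) <= q+q+q-2.
    have E1 : (u.2 : nat) = ff true q l1.2 by rewrite -e1 hh2.
    have E2 : (u.2 : nat) = ff false q l2.2 by rewrite -e2 hh2.
    rewrite E1; apply: (ff_both q _ l2.2 hq); [exact: vrange | exact: vrange | by rewrite -E1 -E2].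
  have hu' : (u.2 : nat) < (q.-1 + q.-1 + q).+1 by lia.
  exists (u.1, Ordinal hu') => //.
  by apply/eqP; rewrite peq /= inordK // !eqxx.
- move=> a b _ _; rewrite /cap_adj forall2 !inner // o1n0 o0.
  rewrite !adj_ed ?pre_pos // !pre2 //=.
  rewrite /tS_adj /copies_adj /spider_adj !spider_baseE /=.
  rewrite (core q _ _ hq (wbound a.2 hq) (wbound b.2 hq)).
  by case: (a.1 == b.1).
Qed.
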